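(* Let $G=(V,E)$ be a finite graph and let $\mu$ be a Bernoulli bond percolation measure on $\Omega=\{0,1\}^E$. Let $C_1,C_2$ be independent random configurations, each with law $\mu$. Consider an adaptive procedure (decision tree) $T$ which, at each step, based on the values of $C_1$ and $C_2$ on the edges revealed so far, chooses a not-yet-revealed edge $e$ and decides whether $e$ belongs to a set $S$ or to its complement $\overline S=E\setminus S$, and then reveals $C_1(e)$ and $C_2(e)$; this continues until every edge has been revealed. Let $S=S(C_1,C_2)\subseteq E$ be the resulting (random) set. Then $C_1\to_S C_2$ and $C_2\to_S C_1=C_1\to_{\overline S}C_2$ are independent, and each of them has law $\mu$.
   Context: A Bernoulli bond percolation measure $\mu$ on $\{0,1\}^E$ is a product measure in which each edge $e$ is open (value $1$) independently with probability $p_e\in[0,1]$. For configurations $C,C'\in\{0,1\}^E$ and $S\subseteq E$, $C\to_S C'$ denotes the configuration that coincides with $C$ on $S$ and with $C'$ on $\overline S=E\setminus S$. *)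

(* Defs.v *)
From mathcomp Require Import all_boot all_order all_algebra.
Set Implicit Arguments. Unset Strict Implicit. Unset Printing Implicit Defensive.
Import Order.TTheory GRing.Theory Num.Theory.
Local Open Scope ring_scope.

Definition config (E : finType) := {ffun E -> bool}.

Definition bern_mu (R : realFieldType) (E : finType) (p : E -> R) (C : config E) : R :=
  \prod_(e : E) (if C e then p e else 1 - p e).

(* C ->_S C' : coincides with C on S and with C' off S. *)
Definition cmix (E : finType) (S : {set E}) (C C' : config E) : config E :=
  [ffun e => if e \in S then C e else C' e].

(* Decision tree: a history records, for each revealed edge in order,
   (edge, whether it was put into S, C1(edge), C2(edge)).
   A strategy chooses, from the history, the next edge and whether it goes to S. *)
Definition history (E : finType) := seq (E * bool * bool * bool).
Definition strategy (E : finType) := history E -> E * bool.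

Fixpoint run (E : finType) (T : strategy E) (C1 C2 : config E) (n : nat) : history E :=
  match n with
  | 0 => [::]
  | n.+1 => let h := run T C1 C2 n in
            let eb := T h in
            rcons h (eb.1, eb.2, C1 eb.1, C2 eb.1)
  end.

Definition full_run (E : finType) (T : strategy E) (C1 C2 : config E) : history E :=
  run T C1 C2 #|E|.

(* The procedure always picks a not-yet-revealed edge: along every run the
   revealed edges are distinct (hence, after #|E| steps, all edges are revealed). *)
Definition valid_tree (E : finType) (T : strategy E) : Prop :=
  forall C1 C2 : config E,
    uniq (map (fun x : E * bool * bool * bool => x.1.1.1) (full_run T C1 C2)).

Definition tree_set (E : finType) (T : strategy E) (C1 C2 : config E) : {set E} :=
  [set e | has (fun x : E * bool * bool * bool => (x.1.1.1 == e) && x.1.1.2)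
               (full_run T C1 C2)].

(* Main.v *)
Require Import Defs.
From mathcomp Require Import all_boot all_order all_algebra.
Import Order.TTheory GRing.Theory Num.Theory.
Local Open Scope ring_scope.

Section Aux.
Variables (E : finType) (T : strategy E).

Lemma run_prefix (C1 C2 : config E) (n k : nat) :
  exists s, run T C1 C2 (k + n)%N = run T C1 C2 n ++ s.
Proof.
elim: k => [|k [s IH]]; first by exists [::]; rewrite cats0.
rewrite addSn /= IH; eexists; by rewrite -cats1 -catA.
Qed.

Lemma has_fst (e : E) (l : history E) :
  has (fun y : E * bool * bool * bool => (y.1.1.1 == e) && y.1.1.2) l ->
  e \in map (fun x : E * bool * bool * bool => x.1.1.1) l.
Proof. by move/hasP=> [y yin /andP[/eqP <- _]]; apply: map_f. Qed.

Lemma mem_S (hT : valid_tree T) (C1 C2 : config E) (n : nat) :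
  (n < #|E|)%N ->
  ((T (run T C1 C2 n)).1 \in tree_set T C1 C2) = (T (run T C1 C2 n)).2.
Proof.
move=> ltn.
have [s Hs] := run_prefix C1 C2 n.+1 (#|E| - n.+1).
rewrite subnK // in Hs.
have := hT C1 C2; rewrite /tree_set in_set /full_run Hs /= -cats1 -catA /=.
set x := (_, _, _, _).
rewrite map_cat cat_uniq /= => /and3P[_ H1 /andP[H2 _]].
rewrite has_cat /= eqxx /=.
case E1: (has _ (run T C1 C2 n)).
  move/has_fst: E1 => E1. by move: H1; rewrite negb_or E1.
case E2: (has _ s); last by rewrite orbF.
move/has_fst: E2 => E2. by move: H2; rewrite E2.
Qed.

End Aux.

Theorem mainTheorem5 (R : realFieldType) (E : finType) (p : E -> R)
  (hp : forall e, 0 <= p e <= 1) (T : strategy E) (hT : valid_tree T) :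
  (forall C1 C2 : config E,
     cmix (tree_set T C1 C2) C2 C1 = cmix (~: tree_set T C1 C2) C1 C2) /\
  (forall D1 D2 : config E,
     \sum_(C1 : config E) \sum_(C2 : config E |
          (cmix (tree_set T C1 C2) C1 C2 == D1) &&
          (cmix (tree_set T C1 C2) C2 C1 == D2))
        bern_mu p C1 * bern_mu p C2
     = bern_mu p D1 * bern_mu p D2).
Proof.
split.
  by move=> C1 C2; apply/ffunP=> e; rewrite !ffunE in_setC; case: (e \in _).
move=> D1 D2.
pose phi (u : config E * config E) :=
  (cmix (tree_set T u.1 u.2) u.1 u.2, cmix (tree_set T u.1 u.2) u.2 u.1).
have phiinj : injective phi.
  move=> [C1 C2] [C1' C2'] [/= H1 H2].
  have Hrun : forall n, (n <= #|E|)%N -> run T C1 C2 n = run T C1' C2' n.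
    elim=> [//|n IH] le /=.
    rewrite IH ?(ltnW le) //.
    have m1 := @mem_S _ _ hT C1 C2 n le; have m2 := @mem_S _ _ hT C1' C2' n le.
    rewrite IH ?(ltnW le) // in m1.
    move: (congr1 (fun f : config E => f (T (run T C1' C2' n)).1) H1).
    move: (congr1 (fun f : config E => f (T (run T C1' C2' n)).1) H2).
    rewrite /= !ffunE m1 m2.
    by case: (T _).2 => -> ->.
  have HS : tree_set T C1 C2 = tree_set T C1' C2'.
    by rewrite /tree_set /full_run Hrun.
  rewrite -HS in H1 H2.
  congr pair; apply/ffunP=> e.
    move: (congr1 (fun f : config E => f e) H1) (congr1 (fun f : config E => f e) H2).
    by rewrite !ffunE; case: (e \in _) => // _ ->.
  move: (congr1 (fun f : config E => f e) H1) (congr1 (fun f : config E => f e) H2).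
  by rewrite !ffunE; case: (e \in _) => // -> _.
have [g phiK gK] := injF_bij phiinj.
rewrite pair_big_dep /=.
rewrite (big_pred1 (g (D1, D2))); last first.
  move=> [C1 C2] /=.
  apply/idP/eqP.
    move=> /andP[/eqP H1 /eqP H2].
    have : phi (C1, C2) = (D1, D2) by rewrite /phi /= H1 H2.
    by move=> <-; rewrite phiK.
  move=> H; have := gK (D1, D2); rewrite -H /phi /= => [[-> ->]].
  by rewrite !eqxx.
have := gK (D1, D2); case: (g (D1, D2)) => C1 C2 /=; rewrite /phi /= => [[<- <-]].
rewrite /bern_mu -!big_split /=.
apply: eq_bigr => e _; rewrite !ffunE.
by case: (e \in _); rewrite // mulrC.
Qed.
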